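(* Let $X=(X_1,\dots,X_n)$ be a random vector in $\mathcal{X}^n$ whose distribution is exchangeable, let $T:\mathcal{X}^n\to\mathbb{R}$ be a fixed (measurable) function, and let $q$ be any probability distribution on $\mathcal{S}_n$. Define $$\bar P=\sum_{\sigma,\sigma_0\in\mathcal{S}_n}q(\sigma)\,q(\sigma_0)\,\mathbf{1}\{T(X_{\sigma\circ\sigma_0^{-1}})\ge T(X)\}.$$ Then $\mathbb{P}\{\bar P\le\alpha\}\le2\alpha$ for all $\alpha\in[0,1]$.
   Context: $\mathcal{S}_n$ denotes the set (group) of all permutations of $[n]=\{1,\dots,n\}$. For $x\in\mathcal{X}^n$ and $\sigma\in\mathcal{S}_n$, $x_\sigma:=(x_{\sigma(1)},\dots,x_{\sigma(n)})$. $X$ is exchangeable means $X\stackrel{d}{=}X_\pi$ for every fixed $\pi\in\mathcal{S}_n$. $q(\sigma)$ denotes the probability that $q$ assigns to $\sigma$. *)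

(* Defs.v *)
From HB Require Import structures.
From mathcomp Require Import all_boot all_order all_algebra all_fingroup.
From mathcomp Require Import all_classical all_reals all_analysis.
Unset Printing Implicit Defensive.
Import Order.TTheory GRing.Theory Num.Theory.
Local Open Scope classical_set_scope.
Local Open Scope ring_scope.

Definition permute (T : Type) (n : nat) (x : 'I_n -> T) (s : {perm 'I_n}) : 'I_n -> T :=
  fun i => x (s i).

(* Product sigma-algebra on X^n = ('I_n -> X): generated by the cylinders
   {x | x i \in B}, B measurable in X. *)
Definition cylinders (d : measure_display) (X : measurableType d) (n : nat)
  : set (set ('I_n -> X)) :=
  [set A | exists (i : 'I_n) (B : set X), measurable B /\ A = (fun x => x i) @^-1` B].

Definition prod_measurable (d : measure_display) (X : measurableType d) (n : nat)
  : set (set ('I_n -> X)) := <<s (@cylinders d X n) >>.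

Definition Pbar (R : realType) (X : Type) (n : nat) (T : ('I_n -> X) -> R)
  (q : {perm 'I_n} -> R) (x : 'I_n -> X) : R :=
  \sum_(s : {perm 'I_n}) \sum_(s0 : {perm 'I_n})
     q s * q s0 * ((T x <= T (fun i => x (s ((s0^-1)%g i))))%R : bool)%:R.

(* Main.v *)
Require Import Defs.
From HB Require Import structures.
From mathcomp Require Import all_boot all_order all_algebra all_fingroup.
From mathcomp Require Import all_classical all_reals all_analysis.
From mathcomp Require Import measurable_realfun.
From mathcomp Require Import ring lra.
Import Order.TTheory GRing.Theory Num.Theory.
Local Open Scope classical_set_scope.
Local Open Scope ring_scope.

Section Det.
Variable R : realFieldType.

Lemma pair_ineq (I : finType) (f : I -> R) (c : I -> I -> R) :
  (forall i, 0 <= f i) -> (forall i j, 0 <= c i j) -> (forall i j, 1 <= c i j + c j i) ->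
  (\sum_i f i)^+2 <= 2 * \sum_i \sum_j f i * f j * c i j.
Proof.
move=> f0 c0 c1.
have -> : (\sum_i f i)^+2 = \sum_i \sum_j f i * f j.
  by rewrite expr2 mulr_suml; apply: eq_bigr => i _; rewrite mulr_sumr.
have -> : 2 * \sum_i \sum_j f i * f j * c i j =
   \sum_i \sum_j f i * f j * (c i j + c j i).
  rewrite mulr2n mulrDl mul1r.
  rewrite [X in _ + X = _]exchange_big /= -big_split /=.
  apply: eq_bigr => i _; rewrite -big_split /=; apply: eq_bigr => j _.
  by rewrite mulrDr [f j * f i]mulrC.
apply: ler_sum => i _; apply: ler_sum => j _.
rewrite -[X in X <= _]mulr1; apply: ler_wpM2l => //.
exact: mulr_ge0.
Qed.

Lemma cs_ineq (I : finType) (m : I -> R) :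
  (\sum_i m i)^+2 <= #|I|%:R * \sum_i (m i)^+2.
Proof.
have h : 0 <= \sum_i \sum_j (m i - m j)^+2.
  by apply: sumr_ge0 => i _; apply: sumr_ge0 => j _; exact: sqr_ge0.
have e : \sum_i \sum_j (m i - m j)^+2 =
   2 * (#|I|%:R * \sum_i (m i)^+2) - 2 * (\sum_i m i)^+2.
  have -> : \sum_i \sum_j (m i - m j)^+2 =
     \sum_i \sum_j ((m i)^+2 + (m j)^+2 - 2 * (m i * m j)).
    by apply: eq_bigr => i _; apply: eq_bigr => j _; ring.
  set S2 := \sum_i (m i)^+2; set S1 := \sum_i m i; set N := #|I|%:R.
  have e1 : forall i, \sum_j ((m i)^+2 + (m j)^+2 - 2 * (m i * m j)) =
      N * (m i)^+2 + S2 - 2 * (m i * S1).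
    move=> i; rewrite big_split /= big_split /= sumrN sumr_const -!mulr_sumr -/S2 -/S1.
    rewrite -mulr_natl -/N; ring.
  under eq_bigr do rewrite e1.
  rewrite big_split /= big_split /= sumrN sumr_const -mulr_natl -mulr_sumr.
  rewrite -mulr_sumr -mulr_suml; rewrite /N /S2 /S1; ring.
rewrite e in h; lra.
Qed.


Lemma det_main (gT : finGroupType) (u : gT -> R) (q : gT -> R)
  (hq0 : forall s, 0 <= q s) (hq1 : \sum_(s : gT) q s = 1) (alpha : R) (ha : 0 <= alpha) :
  \sum_(r : gT) (((\sum_(s : gT) \sum_(s0 : gT) q s * q s0 * ((u r <= u (s0^-1 * s * r)%g)%R : bool)%:R) <= alpha)%R : bool)%:R
    <= 2 * alpha * #|gT|%:R.
Proof.
set F := fun r => \sum_(s : gT) \sum_(s0 : gT) q s * q s0 * ((u r <= u (s0^-1 * s * r)%g)%R : bool)%:R.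
rewrite -/F.
set b := fun r => (((F r <= alpha)%R : bool)%:R : R).
have b0 : forall r, 0 <= b r by move=> r; rewrite /b; case: (F r <= alpha).
have b1 : forall r, b r <= 1 by move=> r; rewrite /b; case: (F r <= alpha).
set k := \sum_(r : gT) b r.
set N := #|gT|%:R.
have H1 : \sum_(r : gT) b r * F r <= alpha * k.
  rewrite /k mulr_sumr; apply: ler_sum => r _; rewrite /b.
  by case h: (F r <= alpha); rewrite /= ?mulr1n ?mulr0n ?mul1r ?mulr1 ?mul0r ?mulr0.

have reidx : forall (h : gT -> R) s, \sum_(r : gT) h r = \sum_(g : gT) h (s^-1 * g)%g.
  by move=> h s; rewrite (reindex_inj (mulgI s^-1)%g).
set m := fun g => \sum_(s : gT) q s * b (s^-1 * g)%g.
have H2 : \sum_(r : gT) b r * F r = \sum_(g : gT) \sum_(s : gT) \sum_s0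
    (q s * q s0 * (b (s^-1 * g)%g * ((u (s^-1 * g)%g <= u (s0^-1 * g)%g)%R : bool)%:R)).
  rewrite /F.
  under eq_bigr do rewrite mulr_sumr.
  under eq_bigr do under eq_bigr do rewrite mulr_sumr.
  rewrite exchange_big /= [RHS]exchange_big /=.
  apply: eq_bigr => s _; rewrite (reidx _ s); apply: eq_bigr => g _.
  apply: eq_bigr => s0 _.
  rewrite !mulgA mulgK; ring.
have H3 : forall g, (m g)^+2 <= 2 * \sum_(s : gT) \sum_s0
    (q s * q s0 * (b (s^-1 * g)%g * ((u (s^-1 * g)%g <= u (s0^-1 * g)%g)%R : bool)%:R)).
  move=> g.
  have hc0 : forall i j : gT, 0 <= ((u (i^-1 * g)%g <= u (j^-1 * g)%g)%R : bool)%:R :> R.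
    by move=> i j; rewrite ler0n.
  have hc1 : forall i j : gT, 1 <= ((u (i^-1 * g)%g <= u (j^-1 * g)%g)%R : bool)%:R
     + ((u (j^-1 * g)%g <= u (i^-1 * g)%g)%R : bool)%:R :> R.
    move=> i j; case/orP: (le_total (u (i^-1 * g)%g) (u (j^-1 * g)%g)) => ->.
      by rewrite /= mulr1n lerDl; rewrite ler0n.
    by rewrite /= mulr1n lerDr; rewrite ler0n.
  have := @pair_ineq gT (fun s => q s * b (s^-1 * g)%g) _ _ hc0 hc1.
  move=> /(_ (fun s => mulr_ge0 (hq0 s) (b0 _))) h.
  apply: (le_trans h); apply: ler_wpM2l => //.
  apply: ler_sum => s _; apply: ler_sum => s0 _.
  set c := (_ : bool)%:R.
  have -> : q s * b (s^-1 * g)%g * (q s0 * b (s0^-1 * g)%g) * c =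
    (q s * q s0 * (b (s^-1 * g)%g * c)) * b (s0^-1 * g)%g by ring.
  apply: ler_piMr => //.
  by apply: mulr_ge0; [apply: mulr_ge0 | apply: mulr_ge0; [apply: b0|rewrite /c; rewrite ler0n]].
have H5 : \sum_(g : gT) m g = k.
  rewrite /m exchange_big /=.
  under eq_bigr do rewrite -mulr_sumr -(reidx b).
  by rewrite -mulr_suml hq1 mul1r.
have H6 := @cs_ineq gT m.
have H7 : \sum_(g : gT) (m g)^+2 <= 2 * (alpha * k).
  apply: (le_trans (ler_sum _ (fun g _ => H3 g))).
  rewrite -mulr_sumr -H2; apply: ler_wpM2l => //.
change (k <= 2 * alpha * N).
rewrite H5 in H6.
have k0 : 0 <= k by apply: sumr_ge0 => r _; exact: b0.
have N0 : 0 <= N by [].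
have H8 : k ^+ 2 <= N * (2 * (alpha * k)).
  apply: (le_trans H6); apply: ler_wpM2l => //.
rewrite expr2 in H8.
have [k_0|knz] := eqVneq k 0.
  by rewrite k_0; apply: mulr_ge0 => //; apply: mulr_ge0.
have kp : 0 < k by rewrite lt_def knz k0.
have H9 : k * k <= (2 * alpha * N) * k.
  by apply: (le_trans H8); rewrite le_eqVlt; apply/orP; left; apply/eqP; ring.
by rewrite ler_pM2r in H9.
Qed.
End Det.

Theorem theorem8 (dO : measure_display) (Omega : measurableType dO)
  (R : realType) (P : probability Omega R)
  (dX : measure_display) (Xs : measurableType dX) (n : nat)
  (X : Omega -> ('I_n -> Xs))
  (hXmeas : forall i : 'I_n, measurable_fun setT (fun w => X w i))
  (hexch : forall (pi : {perm 'I_n}) (A : set ('I_n -> Xs)),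
      @prod_measurable dX Xs n A ->
      P (X @^-1` A) = P ((fun w => @permute Xs n (X w) pi) @^-1` A))
  (T : ('I_n -> Xs) -> R)
  (hT : forall B : set R, measurable B -> @prod_measurable dX Xs n (T @^-1` B))
  (q : {perm 'I_n} -> R)
  (hq0 : forall s, 0 <= q s)
  (hq1 : \sum_(s : {perm 'I_n}) q s = 1) :
  forall alpha : R, 0 <= alpha <= 1 ->
    (P [set w | (@Pbar R Xs n T q (X w) <= alpha)%R] <= (2 * alpha)%:E)%E.
Proof.
move=> alpha /andP [a0 a1].
pose M := g_sigma_algebraType (@cylinders dX Xs n).
have cm : forall (Y : Omega -> ('I_n -> Xs)),
    (forall i, measurable_fun setT (fun w => Y w i)) -> measurable_fun setT (Y : Omega -> M).
  move=> Y hY; apply: (@measurability _ _ Omega M setT Y (@cylinders dX Xs n)) => //.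
  move=> _ [B [i [C [mC ->]]] <-]; exact: hY i measurableT C mC.
have mT : measurable_fun (setT : set M) T.
  by move=> _ B mB; rewrite setTI; exact: hT B mB.
have mperm : forall f : 'I_n -> 'I_n,
    measurable_fun (setT : set M) (fun y : M => ((fun i => y (f i)) : M)).
  move=> f; apply: (@measurability _ _ M M setT _ (@cylinders dX Xs n)) => //.
  move=> _ [B [i [C [mC ->]]] <-]; rewrite setTI; apply: sub_sigma_algebra.
  by exists (f i), C; split.
have mbool : measurable_fun (setT : set bool) (fun b : bool => (b%:R : R)).
  by move=> _ B _.
have mPbar : measurable_fun (setT : set M) (fun y : M => @Pbar R Xs n T q y).
  rewrite /Pbar; apply: measurable_sum => s; apply: measurable_sum => s0.
  apply: measurable_funM; first exact: measurable_cst.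
  have mb : measurable_fun (setT : set M)
      (fun y : M => ((T y <= T (fun i => y (s ((s0^-1)%g i))))%R)).
    by apply: measurable_fun_ler => //; apply: (measurableT_comp mT (mperm _)).
  exact: (measurableT_comp mbool mb).
pose E : set M := [set y | (@Pbar R Xs n T q y <= alpha)%R].
have mE : measurable E.
  have mb := measurable_fun_ler mPbar (measurable_cst alpha).
  have := mb measurableT [set true] I.
  by rewrite setTI.
pose Y := fun (r : {perm 'I_n}) w => @permute Xs n (X w) r.
have mY : forall r, measurable_fun setT (Y r : Omega -> M).
  by move=> r; apply: cm => i; exact: hXmeas (r i).
have mEr : forall r, measurable (Y r @^-1` E).
  by move=> r; have := mY r measurableT E mE; rewrite setTI.
have hex : forall r, P (X @^-1` E) = P (Y r @^-1` E).
  by move=> r; exact: hexch r E mE.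
have Pfin : P (X @^-1` E) \is a fin_num.
  by rewrite (hex 1%g); exact: fin_num_measure.
pose p := fine (P (X @^-1` E)).
have Pp : P (X @^-1` E) = p%:E by rewrite fineK.
pose N := (#|{perm 'I_n}|%:R : R).
have key : ((p * N)%:E <= (2 * alpha * N)%:E)%E.
  have -> : (p * N)%:E = (\sum_(r : {perm 'I_n}) P (Y r @^-1` E))%E.
    rewrite (eq_bigr (fun _ => p%:E)); last by move=> r _; rewrite -hex Pp.
    by rewrite sumEFin sumr_const mulr_natr.
  have mind : forall r, measurable_fun setT (fun w => (\1_(Y r @^-1` E) w : R)%:E).
    by move=> r; apply/measurable_EFinP; exact: measurable_indic.
  rewrite (eq_bigr (fun r => \int[P]_(w in setT) (\1_(Y r @^-1` E) w : R)%:E)%E); last first.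
    by move=> r _; rewrite integral_indic // setIT.
  have hf0 : forall r w, setT w -> (0 <= (\1_(Y r @^-1` E) w : R)%:E)%E.
    by move=> r w _; rewrite lee_fin indicE ler0n.
  rewrite -(ge0_integral_sum P measurableT mind hf0).
  apply: (@le_trans _ _ (\int[P]_(w in setT) (cst (2 * alpha * N)%:E) w)%E); last first.
    rewrite integral_cst //; have h1 : forall z : \bar R, z = 1%E -> ((2 * alpha * N)%:E * z <= (2 * alpha * N)%:E)%E by move=> z ->; rewrite mule1.
    by apply: h1; exact: probability_setT.
  apply: ge0_le_integral => //.
  - by move=> w _; apply: sume_ge0 => r _; rewrite lee_fin indicE ler0n.
  - by apply: emeasurable_sum => r; exact: mind.
  move=> w _; rewrite sumEFin lee_fin.
  under eq_bigr do rewrite indicE.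
  pose u := fun t : {perm 'I_n} => T (fun i => X w (t i)).
  have hm : forall r, (w \in Y r @^-1` E) =
     ((\sum_(s : {perm 'I_n}) \sum_(s0 : {perm 'I_n}) q s * q s0 *
        ((u r <= u (s0^-1 * s * r)%g)%R : bool)%:R) <= alpha)%R.
    move=> r.
    have -> : (w \in Y r @^-1` E) = (@Pbar R Xs n T q (Y r w) <= alpha)%R.
      by apply/idP/idP; rewrite in_setE.
    congr (_ <= _)%R; rewrite /Pbar; apply: eq_bigr => s _; apply: eq_bigr => s0 _.
    congr (_ * ((_ <= T _)%R : bool)%:R).
    by apply: funext => i; rewrite !permM.
  under eq_bigr do rewrite hm.
  exact: det_main.
have -> : [set w | (@Pbar R Xs n T q (X w) <= alpha)%R] = X @^-1` E by [].
rewrite Pp lee_fin; rewrite lee_fin in key.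
have Npos : 0 < N by rewrite ltr0n; apply/card_gt0P; exists 1%g.
by rewrite -(ler_pM2r Npos).
Qed.
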